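(* Let $\varphi:A^\bullet\to B^\bullet$ and $\psi:B^\bullet\to C^\bullet$ be (continuous) homomorphisms of complexes of Abelian topological groups. (a) If $\varphi$ and $\psi$ are quasi-open, then so is $\psi\varphi$. (b) If $\psi$ is a topological embedding and the zero homomorphism $0^\bullet\to C^\bullet/\psi B^\bullet$ is quasi-open, then $\psi$ is quasi-open; and if in addition $\psi\varphi$ is quasi-open, then $\varphi$ is quasi-open.
   Context: Complexes are $\mathbb Z$-graded complexes of Abelian topological groups with continuous differentials; homomorphisms are continuous chain maps. For a complex $A^\bullet$ with differential $d_A$, $Z^n(A^\bullet)=\ker(d_A|A^n)$ with the subspace topology. A homomorphism $\varphi:A^\bullet\to B^\bullet$ is quasi-open if for every $n$ the homomorphism $\varphi'^n:Z^n(A^\bullet)\oplus B^{n-1}\to Z^n(B^\bullet)$, $(a,b)\mapsto\varphi a-d_Bb$, is open. $C^\bullet/\psi B^\bullet$ carries the quotient topology and induced differential, and $0^\bullet$ denotes the zero complex. *)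

(* Defs.v *)
From HB Require Import structures.
From mathcomp Require Import all_boot all_algebra.
From mathcomp Require Import all_classical all_reals topology tvs.


Unset Strict Implicit.
Unset Printing Implicit Defensive.

Import GRing.Theory.
Local Open Scope classical_set_scope.
Local Open Scope ring_scope.

Definition zeroT : Type := unit.
HB.instance Definition _ := Choice.copy zeroT unit.

Definition zadd (_ _ : zeroT) : zeroT := tt.
Definition zopp (_ : zeroT) : zeroT := tt.
Lemma zaddA : associative zadd. Proof. by []. Qed.
Lemma zaddC : commutative zadd. Proof. by []. Qed.
Lemma zadd0 : left_id (tt : zeroT) zadd. Proof. by case. Qed.
Lemma zaddN : left_inverse (tt : zeroT) zopp zadd. Proof. by []. Qed.
HB.instance Definition _ :=
  GRing.isZmodule.Build zeroT zaddA zaddC zadd0 zaddN.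

Definition zopen : set_system zeroT := fun _ => True.
Lemma zopenT : zopen setT. Proof. by []. Qed.
Lemma zopenI : setI_closed zopen. Proof. by []. Qed.
Lemma zopenU (I : Type) (f : I -> set zeroT) :
  (forall i, zopen (f i)) -> zopen (\bigcup_i f i). Proof. by []. Qed.
HB.instance Definition _ := isOpenTopological.Build zeroT zopenT zopenI zopenU.

Lemma to_zeroT_continuous (X : topologicalType) (f : X -> zeroT) : continuous f.
Proof.
apply/continuousP => A _.
have [Att|nAtt] := pselect (A tt).
  suff -> : f @^-1` A = setT by exact: openT.
  by apply/seteqP; split => // x _ /=; case: (f x).
suff -> : f @^-1` A = set0 by exact: open0.
by apply/seteqP; split => // x /=; case: (f x).
Qed.

HB.instance Definition _ :=
  PreTopologicalNmodule_isTopologicalNmodule.Build zeroT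
    (@to_zeroT_continuous _ _).
HB.instance Definition _ :=
  TopologicalNmodule_isTopologicalZmodule.Build zeroT
    (@to_zeroT_continuous _ _).

Record complex := Complex {
  cobj : int -> topologicalZmodType;
  cdiff : forall n : int, cobj n -> cobj (n + 1);
  cdiff_additive : forall n, zmod_morphism (cdiff n);
  cdiff_continuous : forall n, continuous (cdiff n);
  cdiff_cdiff : forall n (x : cobj n), cdiff (n + 1) (cdiff n x) = 0
}.

Definition is_hom (A B : complex) (f : forall n, cobj A n -> cobj B n) :=
  (forall n, zmod_morphism (f n)) /\ (forall n, continuous (f n)) /\
  (forall n (x : cobj A n), cdiff B n (f n x) = f (n + 1) (cdiff A n x)).

Definition cycles (A : complex) (n : int) : set (cobj A n) :=
  [set a | cdiff A n a = 0].

(* phi'^(n+1) : Z^(n+1)(A) (+) B^n -> Z^(n+1)(B), (a, b) |-> phi a - d_B b;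
   the image of a set U, as a subset of the subspace Z^(n+1)(B). *)
Definition qo_image (A B : complex) (f : forall n, cobj A n -> cobj B n)
  (n : int) (U : set (set_type (cycles A (n + 1)) * cobj B n)) :
  set (set_type (cycles B (n + 1))) :=
  [set z | exists2 p, U p &
     set_val z = f (n + 1) (set_val p.1) - cdiff B n p.2].

(* Quasi-openness (stated at every degree n+1, n : int, i.e. at every degree). *)
Definition quasi_open (A B : complex) (f : forall n, cobj A n -> cobj B n) :=
  forall (n : int) (U : set (set_type (cycles A (n + 1)) * cobj B n)),
    open U -> open (qo_image A B f n U).

Definition zdiff (n : int) (_ : zeroT) : zeroT := tt.
Lemma zdiff_additive n : zmod_morphism (zdiff n). Proof. by []. Qed.
Lemma zdiff_continuous n : continuous (zdiff n).
Proof. exact: to_zeroT_continuous. Qed.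
Lemma zdiff_zdiff n (x : zeroT) : zdiff (n + 1) (zdiff n x) = 0.
Proof. by []. Qed.
Definition zero_complex : complex :=
  Complex (fun _ => zeroT) zdiff zdiff_additive zdiff_continuous zdiff_zdiff.

Definition zero_hom (C : complex) : forall n, cobj zero_complex n -> cobj C n :=
  fun n _ => 0.

Definition top_embedding (X Y : topologicalType) (f : X -> Y) :=
  injective f /\ continuous f /\
  forall U : set X, open U -> exists2 V : set Y, open V & f @` U = V `&` range f.

(* [q : C -> Q] presents Q as the quotient complex C / psi B: each q n is a
   surjective homomorphism with kernel psi(B^n), Q^n carries the quotient
   topology, and (q being a chain map) the differential of Q is the induced
   one.  This determines C/psi B up to isomorphism of complexes. *)
Definition is_quotient_complex (B C Q : complex)
  (psi : forall n, cobj B n -> cobj C n) (q : forall n, cobj C n -> cobj Q n) :=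
  is_hom C Q q /\
  (forall n (y : cobj Q n), exists c, q n c = y) /\
  (forall n (c : cobj C n), q n c = 0 <-> exists b, psi n b = c) /\
  (forall n (V : set (cobj Q n)), open V <-> open (q n @^-1` V)).

(* Main.v *)
Require Import Defs.
From HB Require Import structures.
From mathcomp Require Import all_boot all_algebra.
From mathcomp Require Import all_classical all_reals topology tvs.
Import GRing.Theory.
Local Open Scope classical_set_scope.
Local Open Scope ring_scope.
Set Implicit Arguments.
Unset Strict Implicit.

Lemma sub_nbhsP (X : topologicalType) (A : set X) (x : set_type A) (S : set (set_type A)) :
  nbhs x S -> exists2 N, nbhs (set_val x) N & (forall y : set_type A, N (set_val y) -> S y).
Proof.
rewrite nbhsE => -[W [oW Wx] WS].
case: oW => V oV VW.
exists V; first by rewrite -VW in Wx; exists V.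
by move=> y Vy; apply: WS; rewrite -VW.
Qed.

Lemma sub_nbhs_val (X : topologicalType) (A : set X) (x : set_type A) (N : set X) :
  nbhs (set_val x) N -> nbhs x [set y : set_type A | N (set_val y)].
Proof.
rewrite nbhsE => -[V [oV Vx] VN].
rewrite nbhsE; exists (set_val @^-1` V); last by move=> y /VN.
split => //; by exists V.
Qed.

Lemma prod_nbhsP (X Y : topologicalType) (x : X) (y : Y) (S : set (X * Y)) :
  nbhs (x, y) S -> exists P, exists Q, [/\ nbhs x P, nbhs y Q &
     forall a b, P a -> Q b -> S (a, b)].
Proof.
case=> [[P Q] [Px Qy] PQS]; exists P, Q; split => // a b Pa Qb.
by apply: PQS.
Qed.

Lemma prod_nbhs_mk (X Y : topologicalType) (x : X) (y : Y) P Q :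
  nbhs x P -> nbhs y Q -> nbhs (x, y) (P `*` Q).
Proof. by move=> Px Qy; exists (P, Q). Qed.

Lemma openP' (X : topologicalType) (S : set X) :
  (forall x, S x -> nbhs x S) -> open S.
Proof. by move=> H; rewrite openE => x /H. Qed.

Lemma cont_pre (X Y : topologicalType) (f : X -> Y) x T :
  continuous f -> nbhs (f x) T -> nbhs x (f @^-1` T).
Proof. by move=> cf /cf. Qed.

Lemma nbhs_open_sub (X : topologicalType) (x : X) (N : set X) :
  nbhs x N -> exists2 V, open V /\ V x & V `<=` N.
Proof. by rewrite nbhsE => -[V]; exists V. Qed.

Section Add.
Variables (G H : zmodType) (f : G -> H) (hf : zmod_morphism f).
Lemma hf0 : f 0 = 0.
Proof. by have := hf 0 0; rewrite subrr => ->; rewrite subrr. Qed.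
Lemma hfN x : f (- x) = - f x.
Proof. by have := hf 0 x; rewrite sub0r hf0 sub0r. Qed.
Lemma hfD x y : f (x + y) = f x + f y.
Proof. by have := hf x (- y); rewrite opprK hfN opprK. Qed.
Lemma hfB x y : f (x - y) = f x - f y.
Proof. exact: hf. Qed.
End Add.
Lemma subk_cont (M : topologicalZmodType) (k : M) : continuous (fun x : M => x - k).
Proof.
move=> x.
apply: (@continuous_comp _ _ _ (fun x : M => (x, k)) (fun p : M * M => p.1 - p.2)).
  by apply: cvg_pair; [exact: cvg_id | exact: cvg_cst].
exact: sub_continuous.
Qed.

Lemma q_open (B C Q : complex) psi q : is_hom B C psi ->
  is_quotient_complex B C Q psi q ->
  forall n (V : set (cobj C n)), open V -> open (q n @` V).
Proof.
move=> [psiA _] [[qA _] [_ [qK qT]]] n V oV.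
apply/qT.
have -> : q n @^-1` (q n @` V) =
    \bigcup_(b in [set: cobj B n]) ((fun c => c - psi n b) @^-1` V).
  apply/seteqP; split => c /=.
    case=> v Vv qv.
    have : q n (c - v) = 0 by rewrite hfB // qv subrr.
    case/qK => b pb; exists b => //=; by rewrite pb opprB addrC subrK.
  case=> b _ /= Vc; exists (c - psi n b) => //.
  rewrite hfB //; have -> : q n (psi n b) = 0 by apply/qK; exists b.
  by rewrite subr0.
apply: bigcup_open => b _.
by move/continuousP: (@subk_cont _ (psi n b)); apply.
Qed.
Lemma openX' (X Y : topologicalType) (P : set X) (Q : set Y) :
  open P -> open Q -> open (P `*` Q).
Proof.
move=> oP oQ; apply: openP' => -[x y] [/= Px Qy].
by apply: prod_nbhs_mk; apply: open_nbhs_nbhs.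
Qed.

Lemma nbhs_of_open (X : topologicalType) (P : set X) x : open P -> P x -> nbhs x P.
Proof. by move=> oP Px; apply: open_nbhs_nbhs. Qed.

Lemma cyc_map (A B : complex) f k x : is_hom A B f -> cycles A k x -> cycles B k (f k x).
Proof.
move=> [fA [_ fc]]; rewrite /cycles /= => hx.
by rewrite fc hx hf0.
Qed.

Definition mkZ (B : complex) k (x : cobj B k) (h : cycles B k x) : set_type (cycles B k) :=
  exist _ x (mem_set h).

Lemma valZ (B : complex) k (x : cobj B k) (h : cycles B k x) : set_val (@mkZ B k x h) = x.
Proof. by []. Qed.

Lemma val_cyc (B : complex) k (z : set_type (cycles B k)) : cdiff B k (set_val z) = 0.
Proof. by case: z => x hx; have := set_mem hx. Qed.

Lemma part_a A B C phi psi : is_hom A B phi -> is_hom B C psi ->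
  quasi_open A B phi -> quasi_open B C psi ->
  quasi_open A C (fun n => psi n \o phi n).
Proof.
move=> hphi hpsi qphi qpsi n U oU.
have [phiA [phiC phid]] := hphi; have [psiA [psiC psid]] := hpsi.
apply: openP' => z [[a0 c0] Ua0 ez] /=.
have [W [V [Wa0 Vc0 WVU]]] := prod_nbhsP (nbhs_of_open oU Ua0).
have : nbhs ((0 : cobj C n), c0) ((fun p : cobj C n * cobj C n => p.1 + p.2) @^-1` V).
  by apply: (add_continuous (0, c0)); rewrite /= add0r.
case/prod_nbhsP => N1 [V2 [N10 V2c0 NV]].
have V1 : nbhs (0 : cobj B n) (psi n @^-1` N1).
  apply: cont_pre; first exact: psiC.
  by rewrite (hf0 (psiA n)).
have [W' [oW' W'a0] W'W] := nbhs_open_sub Wa0.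
have [V1' [oV1' V1'0] V1'V1] := nbhs_open_sub V1.
have [V2' [oV2' V2'c0] V2'V2] := nbhs_open_sub V2c0.
have oO := qphi n _ (openX' oW' oV1').
have oO2 := qpsi n _ (openX' oO oV2').
have cw0 : cycles B (n + 1) (phi (n + 1) (set_val a0)).
  by apply: cyc_map => //; exact: val_cyc.
apply: (@filterS _ _ _ (qo_image B C psi n (qo_image A B phi n (W' `*` V1') `*` V2'))).
  move=> z' [[w c] [/= [[a b] [/= W'a V1'b] ew] V2'c] ez'].
  exists (a, psi n b + c).
    apply: WVU; first exact: W'W.
    by apply: (NV (psi n b) c); [exact: V1'V1 | exact: V2'V2].
  rewrite ez' ew /= (hfB (psiA _)) (hfD (cdiff_additive C n)) psid opprD addrA.
  done.
apply: nbhs_of_open => //.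
exists (mkZ cw0, c0) => /=.
  split => //=; exists (a0, 0) => //=; by rewrite (hf0 (cdiff_additive B n)) subr0.
by rewrite ez.
Qed.

Lemma part_b1 B C Q psi q : is_hom B C psi -> is_quotient_complex B C Q psi q ->
  (forall n, top_embedding _ _ (psi n)) ->
  quasi_open zero_complex Q (zero_hom Q) -> quasi_open B C psi.
Proof.
move=> hpsi hq emb q0 n U oU.
have [psiA [psiC psid]] := hpsi.
have hq' := hq; have [[qA [qC qd]] [_ [qK qT]]] := hq'.
have qpsi0 : forall k b, q k (psi k b) = 0 by move=> k b; apply/qK; exists b.
apply: openP' => z [[b0 c0] Ub0 ez] /=.
have [W [V [Wb0 Vc0 WVU]]] := prod_nbhsP (nbhs_of_open oU Ub0).
have [W' W'b0 W'W] := sub_nbhsP Wb0.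
have [W'' [oW'' W''b0] W''W'] := nbhs_open_sub W'b0.
have [inj [_ embo]] := emb (n + 1).
have [O oO eO] := embo _ oW''.
have Ob0 : O (psi (n + 1) (set_val b0)).
  have : (psi (n + 1) @` W'') (psi (n + 1) (set_val b0)) by exists (set_val b0).
  by rewrite eO => -[].
have : nbhs (set_val z, cdiff C n c0) ((fun p : cobj C (n + 1) * cobj C (n + 1) => p.1 + p.2) @^-1` O).
  apply: (add_continuous (set_val z, cdiff C n c0)); rewrite /= ez /= subrK.
  exact: nbhs_of_open.
case/prod_nbhsP => N1 [M [N1z Mdc0 NM]].
have V1 : nbhs c0 (cdiff C n @^-1` M) by apply: cont_pre => //; exact: cdiff_continuous.
have [V2' [oV2' V2'c0] V2'V2] := nbhs_open_sub (filterI Vc0 V1).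
have oD := q0 n _ (openX' (@openT _) (q_open hpsi hq oV2')).
have cqz : cycles Q (n + 1) (q (n + 1) (set_val z)).
  by apply: cyc_map => //; exact: val_cyc.
set D := qo_image _ _ _ _ _ in oD.
have Dz : D (mkZ cqz).
  exists (@mkZ zero_complex (n + 1) tt (erefl _), q n c0) => /=; first by split => //; exists c0.
  rewrite valZ ez (hfB (qA _)) qd qpsi0 /zero_hom.
  by [].
have [D' D'z D'D] := sub_nbhsP (nbhs_of_open oD Dz).
apply: (@filterS _ _ _ _ _ _ (sub_nbhs_val (N := N1 `&` q (n + 1) @^-1` D') _)); last first.
  apply: filterI N1z _; apply: cont_pre => //; exact: qC.
move=> z' [N1z' D'z'].
have cqz' : cycles Q (n + 1) (q (n + 1) (set_val z')).
  by apply: cyc_map => //; exact: val_cyc.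
have := D'D (mkZ cqz') D'z'.
case => [[t y] [/= _ [c V2'c <-]] e].
rewrite valZ /zero_hom /= sub0r in e.
have : q (n + 1) (set_val z' + cdiff C n c) = 0.
  by rewrite (hfD (qA _)) e qd addNr.
case/qK => b eb.
have [Vc V1c] := V2'V2 c V2'c.
have Ob : O (psi (n + 1) b) by rewrite eb; exact: (NM _ _ N1z' V1c).
have : (O `&` range (psi (n + 1))) (psi (n + 1) b) by split=> //; exists b.
rewrite -eO => -[b' W''b' /inj eb'].
have [inj2 _] := emb (n + 1 + 1).
have cb : cycles B (n + 1) b.
  rewrite /cycles /=; apply: inj2.
  rewrite -psid eb (hfD (cdiff_additive C _)) val_cyc cdiff_cdiff addr0.
  by rewrite (hf0 (psiA _)).
exists (mkZ cb, c) => /=.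
  apply: WVU => //; apply: W'W; rewrite valZ; apply: W''W'; by rewrite -eb'.
by rewrite valZ eb addrK.
Qed.

Lemma part_b2_aux A B C Q phi psi q : is_hom A B phi -> is_hom B C psi ->
  is_quotient_complex B C Q psi q ->
  (forall n, top_embedding _ _ (psi n)) ->
  quasi_open zero_complex Q (zero_hom Q) ->
  quasi_open A C (fun n => psi n \o phi n) ->
  forall m (U : set (set_type (cycles A (m + 1 + 1)) * cobj B (m + 1))),
    open U -> open (qo_image A B phi (m + 1) U).
Proof.
move=> hphi hpsi hq emb q0 qc m U oU.
have [phiA [phiC phid]] := hphi; have [psiA [psiC psid]] := hpsi.
have hq' := hq; have [[qA [qC qd]] [_ [qK qT]]] := hq'.
have qpsi0 : forall k b, q k (psi k b) = 0 by move=> k b; apply/qK; exists b.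
apply: openP' => w [[a0 b0] Ua0 ew] /=.
have [W [V [Wa0 Vb0 WVU]]] := prod_nbhsP (nbhs_of_open oU Ua0).
have [V' [oV' V'b0] V'V] := nbhs_open_sub Vb0.
have [inj [_ embo]] := emb (m + 1).
have [O oO eO] := embo _ oV'.
have Ob0 : O (psi (m + 1) b0).
  have : (psi (m + 1) @` V') (psi (m + 1) b0) by exists b0.
  by rewrite eO => -[].
have : nbhs (psi (m + 1) b0, (0 : cobj C (m + 1))) ((fun p : cobj C (m + 1) * cobj C (m + 1) => p.1 + p.2) @^-1` O).
  apply: (add_continuous (psi (m + 1) b0, (0 : cobj C (m + 1)))); rewrite /= addr0.
  exact: nbhs_of_open.
case/prod_nbhsP => O1 [O1' [O1b0 O1'0 OO]].
have O2 : nbhs (0 : cobj C m) (cdiff C m @^-1` O1').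
  apply: cont_pre; first exact: cdiff_continuous.
  by rewrite (hf0 (cdiff_additive C m)).
have [O2' [oO2' O2'0] O2'O2] := nbhs_open_sub O2.
have oD := q0 m _ (openX' (@openT _) (q_open hpsi hq oO2')).
set D := qo_image _ _ _ _ _ in oD.
have cq0 : cycles Q (m + 1) 0 by rewrite /cycles /= (hf0 (cdiff_additive Q _)).
have Dz : D (mkZ cq0).
  exists (@mkZ zero_complex (m + 1) tt (erefl _), q m 0) => /=.
    by split => //; exists 0.
  by rewrite valZ (hf0 (qA _)) (hf0 (cdiff_additive Q _)) /zero_hom subr0.
have [D' D'0 D'D] := sub_nbhsP (nbhs_of_open oD Dz).
have O3 : nbhs (psi (m + 1) b0) (O1 `&` q (m + 1) @^-1` D').
  apply: filterI O1b0 _; apply: cont_pre; first exact: qC.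
  by rewrite qpsi0.
have [O3' [oO3' O3'b0] O3'O3] := nbhs_open_sub O3.
have [W' [oW' W'a0] W'W] := nbhs_open_sub Wa0.
have oN := qc (m + 1) _ (openX' oW' oO3').
set N := qo_image _ _ _ _ _ in oN.
have cpw : cycles C (m + 1 + 1) (psi (m + 1 + 1) (set_val w)).
  by apply: cyc_map => //; exact: val_cyc.
have Nw : N (mkZ cpw).
  exists (a0, psi (m + 1) b0) => //=.
  by rewrite valZ ew (hfB (psiA _)) psid.
have [N' N'w N'N] := sub_nbhsP (nbhs_of_open oN Nw).
apply: (@filterS _ _ _ _ _ _ (sub_nbhs_val (N := psi (m + 1 + 1) @^-1` N') _)); last first.
  by apply: cont_pre => //; exact: psiC.
move=> w' /= N'w'.
have cpw' : cycles C (m + 1 + 1) (psi (m + 1 + 1) (set_val w')).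
  by apply: cyc_map => //; exact: val_cyc.
have := N'N (mkZ cpw') N'w'.
case => [[a c] [/= W'a O3'c] e].
rewrite valZ /= in e.
have [O1c D'c] := O3'O3 c O3'c.
have cqc : cycles Q (m + 1) (q (m + 1) c).
  rewrite /cycles /= qd.
  have -> : cdiff C (m + 1) c = psi (m + 1 + 1) (phi (m + 1 + 1) (set_val a)) - psi (m + 1 + 1) (set_val w').
    by rewrite e opprB (addrC (psi _ _)) subrK.
  by rewrite (hfB (qA _)) !qpsi0 subrr.
have := D'D (mkZ cqc) D'c.
case => [[t y] [/= _ [e' O2'e' <-]] ee].
rewrite valZ /zero_hom /= sub0r in ee.
have : q (m + 1) (c + cdiff C m e') = 0.
  by rewrite (hfD (qA _)) ee -qd addNr.
case/qK => b eb.
have Ob : O (psi (m + 1) b) by rewrite eb; exact: (OO _ _ O1c (O2'O2 _ O2'e')).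
have : (O `&` range (psi (m + 1))) (psi (m + 1) b) by split=> //; exists b.
rewrite -eO => -[b' V'b' /inj eb'].
have [inj2 _] := emb (m + 1 + 1).
exists (a, b) => /=.
  by apply: WVU; [exact: W'W | apply: V'V; rewrite -eb'].
apply: inj2; rewrite e (hfB (psiA _)) -psid eb (hfD (cdiff_additive C _)).
by rewrite cdiff_cdiff addr0.
Qed.

Unset Implicit Arguments.
Theorem proposition2p3 (A B C : complex)
  (phi : forall n, cobj A n -> cobj B n) (psi : forall n, cobj B n -> cobj C n) :
  is_hom A B phi -> is_hom B C psi ->
  (* (a) *)
  (quasi_open A B phi -> quasi_open B C psi ->
     quasi_open A C (fun n => psi n \o phi n)) /\
  (* (b) *)
  (forall (Q : complex) (q : forall n, cobj C n -> cobj Q n),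
     is_quotient_complex B C Q psi q ->
     (forall n, top_embedding _ _ (psi n)) ->
     quasi_open zero_complex Q (zero_hom Q) ->
     quasi_open B C psi /\
     (quasi_open A C (fun n => psi n \o phi n) -> quasi_open A B phi)).
Proof.
move=> hphi hpsi; split.
  by move=> qp qs; exact: part_a.
move=> Q q hq emb q0; split; first exact: part_b1 hpsi hq emb q0.
move=> qc p; rewrite -(subrK 1 p).
exact: (@part_b2_aux A B C Q phi psi q hphi hpsi hq emb q0 qc (p - 1)).
Qed.
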